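(* Let $R,W,Q$ be symmetric BIDMCs and $p\in(0,1)$. If $pR+(1-p)W\preccurlyeq pR+(1-p)Q$, then $W\preccurlyeq Q$.
   Context: A binary-input discrete memoryless channel (BIDMC) $W$ has input $x$ uniformly distributed on $\{0,1\}$, a discrete output alphabet and transition probabilities $\Pr(y\mid x)$. Its LR-profile is $P_W(\varepsilon)=\Pr\big(\mathcal L_W(y)=\varepsilon/(1-\varepsilon)\big)$, where $\mathcal L_W(\hat y)=\Pr(y=\hat y\mid x=0)/\Pr(y=\hat y\mid x=1)$; $W\cong W'$ if their LR-profiles coincide. $W'\preccurlyeq W$ ($W'$ is a degradation of $W$) if there is a channel $T$ from the output alphabet $\mathcal Y$ of $W$ to that of $W'$ with $\Pr(y'\mid x'=a)=\sum_{y\in\mathcal Y}\Pr(y\mid x=a)T(y'\mid y)$, $a\in\{0,1\}$. For BIDMCs $W_1,W_2$ and $p\in[0,1]$, $pW_1+(1-p)W_2$ is the random switching channel that, with probability $p$ (resp. $1-p$), independently of the input, sends the input through $W_1$ (resp. $W_2$) and outputs the channel output together with the index of the channel used. A BIDMC is symmetric if $P_W(\varepsilon)=P_W(1-\varepsilon)$ for all $\varepsilon\in[0,1]$. *)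

(* Defs.v *)
From HB Require Import structures.
From mathcomp Require Import all_boot all_order all_algebra.
From mathcomp Require Import reals.
Set Implicit Arguments. Unset Strict Implicit. Unset Printing Implicit Defensive.
Import Order.TTheory GRing.Theory Num.Theory.
Local Open Scope ring_scope.

(* A BIDMC with finite output alphabet Y is given by its transition
   probabilities W a y = Pr(y | x = a); the input bit 0 is [false], 1 is [true]. *)
Definition is_bidmc (K : realType) (Y : finType) (W : bool -> Y -> K) : Prop :=
  (forall a y, 0 <= W a y) /\ (forall a, \sum_(y : Y) W a y = 1).

(* LR-profile: P_W(eps) = Pr( L_W(y) = eps/(1-eps) ) with x uniform, so
   Pr(y) = (W 0 y + W 1 y)/2.  The event L_W(y) = W 0 y / W 1 y = eps/(1-eps)
   is written in cross-multiplied form W 0 y * (1 - eps) = eps * W 1 y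
   (this handles L = +oo <-> eps = 1; outputs with Pr(y) = 0 contribute 0). *)
Definition LRprofile (K : realType) (Y : finType) (W : bool -> Y -> K)
  (eps : K) : K :=
  \sum_(y : Y | W false y * (1 - eps) == eps * W true y)
     (W false y + W true y) / 2.

Definition symmetric_bidmc (K : realType) (Y : finType) (W : bool -> Y -> K)
  : Prop :=
  forall eps : K, 0 <= eps <= 1 -> LRprofile W eps = LRprofile W (1 - eps).

Definition degraded (K : realType) (Y' Y : finType)
  (W' : bool -> Y' -> K) (W : bool -> Y -> K) : Prop :=
  exists T : Y -> Y' -> K,
    [/\ forall y y', 0 <= T y y',
        forall y, \sum_(y' : Y') T y y' = 1 &
        forall a y', W' a y' = \sum_(y : Y) W a y * T y y'].

(* Random switching channel p W1 + (1-p) W2: output (index, channel output),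
   encoded as inl y1 (channel W1 used) / inr y2 (channel W2 used). *)
Definition switch (K : realType) (Y1 Y2 : finType) (p : K)
  (W1 : bool -> Y1 -> K) (W2 : bool -> Y2 -> K) : bool -> (Y1 + Y2)%type -> K :=
  fun a y => match y with
             | inl y1 => p * W1 a y1
             | inr y2 => (1 - p) * W2 a y2
             end.

(* Main.v *)
Require Import Defs.
From HB Require Import structures.
From mathcomp Require Import all_boot all_order all_algebra.
From mathcomp Require Import reals.
From mathcomp Require Import ring lra.
Import Order.TTheory GRing.Theory Num.Theory.
Local Open Scope ring_scope.
Section Farkas.
Variable K : realFieldType.
Variable J : finType.

Definition dot (y v : J -> K) := \sum_j y j * v j.

Lemma dot_lin (y u v : J -> K) c d :
  dot y (fun j => c * u j + d * v j) = c * dot y u + d * dot y v.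
Proof.
rewrite /dot !mulr_sumr -big_split; apply: eq_bigr => j _ /=.
ring.
Qed.

Lemma dot_linl (y u v : J -> K) c d :
  dot (fun j => c * u j + d * v j) y = c * dot u y + d * dot v y.
Proof.
rewrite /dot !mulr_sumr -big_split; apply: eq_bigr => j _ /=.
ring.
Qed.

Lemma sum_lin (I : finType) (lam f g : I -> K) c d :
  \sum_i lam i * (f i * c + d * g i) =
  (\sum_i lam i * f i) * c + d * \sum_i lam i * g i.
Proof.
rewrite mulr_suml mulr_sumr -big_split; apply: eq_bigr => i _ /=.
ring.
Qed.

Definition lamS {n} (c : K) (lam : 'I_n -> K) : 'I_n.+1 -> K :=
  fun i => if unlift ord0 i is Some k then lam k else c.

Lemma lamS0 n c (lam : 'I_n -> K) : lamS c lam ord0 = c.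
Proof. by rewrite /lamS unlift_none. Qed.

Lemma lamSl n c (lam : 'I_n -> K) i : lamS c lam (lift ord0 i) = lam i.
Proof. by rewrite /lamS liftK. Qed.

Lemma lamS_ge0 n c (lam : 'I_n -> K) :
  0 <= c -> (forall i, 0 <= lam i) -> forall i, 0 <= lamS c lam i.
Proof. by move=> c0 l0 i; rewrite /lamS; case: unlift. Qed.

Lemma farkas_ord n (A : 'I_n -> J -> K) (b : J -> K) :
  (exists lam : 'I_n -> K, (forall i, 0 <= lam i) /\
      forall j, b j = \sum_i lam i * A i j) \/
  (exists y : J -> K, (forall i, 0 <= dot y (A i)) /\ dot y b < 0).
Proof.
elim: n A b => [|n IH] A b.
  have [/forallP b0|] := boolP [forall j, b j == 0].
    left; exists (fun _ => 0); split=> // j.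
    by rewrite big_ord0; apply/eqP.
  rewrite negb_forall => /existsP [j0 bj0].
  right; exists (fun j => - b j); split=> [[]//|].
  rewrite /dot (bigD1 j0) //=.
  have h1 : 0 < b j0 ^+ 2 by rewrite exprn_even_gt0.
  have h2 : \sum_(j | j != j0) - b j * b j <= 0.
    by apply: sumr_le0 => j _; rewrite mulNr -expr2 oppr_le0 sqr_ge0.
  rewrite mulNr -expr2; lra.
set a := A ord0; set A1 := fun i => A (lift ord0 i).
case: (IH A1 b) => [[lam [l0 hl]]|[y [hy yb]]].
  left; exists (lamS 0 lam); split; first exact: lamS_ge0.
  move=> j; rewrite big_ord_recl lamS0 mul0r add0r hl.
  by apply: eq_bigr => i _; rewrite lamSl.
have [ya0|yaN] := leP 0 (dot y a).
  right; exists y; split=> // i.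
  by case: (unliftP ord0 i) => [k ->|->] //; apply: hy.
set ya := dot y a.
pose A2 := fun i j => dot y (A1 i) * a j + (- ya) * A1 i j.
pose b2 := fun j => dot y b * a j + (- ya) * b j.
have nya : 0 < - ya by rewrite oppr_gt0.
case: (IH A2 b2) => [[lam [l0 hl]]|[y' [hy' yb']]].
  pose S := \sum_i lam i * dot y (A1 i).
  have S0 : 0 <= S by apply: sumr_ge0 => i _; apply: mulr_ge0.
  left; exists (lamS ((S - dot y b) / (- ya)) lam); split.
    apply: lamS_ge0 => //; apply: divr_ge0; [lra|lra].
  move=> j; rewrite big_ord_recl lamS0.
  under eq_bigr do rewrite lamSl.
  have := hl j; rewrite /b2 /A2 sum_lin -/S => e.
  set Sg := \sum_i _.
  have nz : - ya != 0 by rewrite gt_eqF.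
  apply: (mulfI nz).
  rewrite mulrDr mulrA mulrCA mulfV // mulr1.
  move: e; rewrite /A1 -/Sg /a => e; rewrite mulrBl; lra.
right; exists (fun j => dot y' a * y j + (- ya) * y' j); split.
  move=> i; rewrite dot_linl.
  case: (unliftP ord0 i) => [k ->|->].
    have := hy' k; rewrite /A2 dot_lin.
    rewrite -/(A1 k) [dot y' a * _]mulrC; lra.
  rewrite -/a -/ya; have -> : dot y' a * ya + - ya * dot y' a = 0 by ring.
  by [].
rewrite dot_linl; move: yb'; rewrite /b2 dot_lin; lra.
Qed.
End Farkas.
Arguments dot {K J}.
Arguments farkas_ord {K J n}.

Lemma farkas (K : realFieldType) (J I : finType) (A : I -> J -> K) (b : J -> K) :
  (exists lam : I -> K, (forall i, 0 <= lam i) /\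
      forall j, b j = \sum_i lam i * A i j) \/
  (exists y : J -> K, (forall i, 0 <= dot y (A i)) /\ dot y b < 0).
Proof.
case: (farkas_ord (fun i : 'I_#|I| => A (enum_val i)) b) => [[lam [l0 hl]]|[y [hy yb]]].
  left; exists (fun x => lam (enum_rank x)); split=> // j.
  rewrite hl (reindex (@enum_val I I)) /=; last exact/onW_bij/enum_val_bij.
  by apply: eq_bigr => i _; rewrite enum_valK.
right; exists y; split=> // x; rewrite -(enum_rankK x); exact: hy.
Qed.

Section Phi.
Variable K : realType.
Variable Z : finType.
Variable u : bool -> Z -> K.
Variable z0 : Z.

Definition ell z (x0 x1 : K) := - (u false z * x0 + u true z * x1).
Definition phi (x0 x1 : K) := \big[Order.max/ell z0 x0 x1]_z ell z x0 x1.
Definition Phi {Y : finType} (C : bool -> Y -> K) :=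
  \sum_y phi (C false y) (C true y).

Lemma ell_le_phi z x0 x1 : ell z x0 x1 <= phi x0 x1.
Proof. exact: le_bigmax. Qed.

Lemma phi_le x0 x1 c : (forall z, ell z x0 x1 <= c) -> phi x0 x1 <= c.
Proof. by move=> h; apply: bigmax_le => // z _; apply: h. Qed.

Lemma phi_hom c x0 x1 : 0 < c -> phi (c * x0) (c * x1) = c * phi x0 x1.
Proof.
move=> c0; apply/le_anti/andP; split.
  apply: phi_le => z.
  have -> : ell z (c * x0) (c * x1) = c * ell z x0 x1 by rewrite /ell; ring.
  by rewrite ler_pM2l // ell_le_phi.
rewrite mulrC -ler_pdivlMr //; apply: phi_le => z.
rewrite ler_pdivlMr //.
have <- : ell z (c * x0) (c * x1) = ell z x0 x1 * c by rewrite /ell; ring.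
exact: ell_le_phi.
Qed.

Lemma Phi_degr (Y' Y : finType) (C' : bool -> Y' -> K) (C : bool -> Y -> K)
  (T : Y -> Y' -> K) :
  (forall y y', 0 <= T y y') -> (forall y, \sum_y' T y y' = 1) ->
  (forall a y', C' a y' = \sum_y C a y * T y y') -> Phi C' <= Phi C.
Proof.
move=> T0 T1 hC; rewrite /Phi.
apply: (@le_trans _ _ (\sum_y' \sum_y T y y' * phi (C false y) (C true y))).
  apply: ler_sum => y' _; apply: phi_le => z.
  rewrite !hC.
  have -> : ell z (\sum_y C false y * T y y') (\sum_y C true y * T y y') =
     \sum_y T y y' * ell z (C false y) (C true y).
    rewrite /ell !mulr_sumr -big_split -sumrN /=; apply: eq_bigr => y _; ring.
  by apply: ler_sum => y _; rewrite ler_wpM2l // ell_le_phi.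
rewrite exchange_big /=; apply: ler_sum => y _.
by rewrite -mulr_suml T1 mul1r.
Qed.

Lemma Phi_switch (Y1 Y2 : finType) (p : K) (C1 : bool -> Y1 -> K)
  (C2 : bool -> Y2 -> K) : 0 < p < 1 ->
  Phi (switch p C1 C2) = p * Phi C1 + (1 - p) * Phi C2.
Proof.
case/andP=> p0 p1; rewrite /Phi big_sumType /= !mulr_sumr.
congr (_ + _); apply: eq_bigr => y _; rewrite phi_hom //; lra.
Qed.
End Phi.

Arguments ell {K Z} u z x0 x1.
Arguments phi {K Z} u z0 x0 x1.
Arguments Phi {K Z} u z0 {Y} C.
Arguments Phi_degr {K Z} u z0 {Y' Y C' C} T.
Arguments Phi_switch {K Z} u z0 {Y1 Y2 p C1 C2}.
Arguments phi_le {K Z u z0 x0 x1 c}.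

Lemma sum_pair (K : realType) (Y1 Y2 : finType) (F : Y1 * Y2 -> K) :
  \sum_x F x = \sum_y \sum_z F (y, z).
Proof. by rewrite pair_bigA; apply: eq_bigr => -[]. Qed.

Lemma sum_delta (K : realType) (Y : finType) (F : Y -> K) y :
  \sum_y' F y' * (y' == y)%:R = F y.
Proof.
rewrite (bigD1 y) //= eqxx mulr1 big1 ?addr0 // => x /negbTE ->.
by rewrite mulr0.
Qed.

Lemma sum_delta2 (K : realType) (Y : finType) (F : Y -> K) c y :
  \sum_y' F y' * (c * (y' == y)%:R) = F y * c.
Proof.
under eq_bigr do rewrite mulrCA.
by rewrite -mulr_sumr sum_delta mulrC.
Qed.

Lemma sum_deltaC (K : realType) (Y : finType) (F : Y -> K) y :
  \sum_y' F y' * (y == y')%:R = F y.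
Proof. under eq_bigr do rewrite eq_sym. exact: sum_delta. Qed.

Lemma sum_delta2C (K : realType) (Y : finType) (F : Y -> K) c y :
  \sum_y' F y' * (c * (y == y')%:R) = F y * c.
Proof. under eq_bigr do rewrite eq_sym. exact: sum_delta2. Qed.

Theorem corollary2 (K : realType) (YR YW YQ : finType)
  (R : bool -> YR -> K) (W : bool -> YW -> K) (Q : bool -> YQ -> K) (p : K) :
  is_bidmc R -> is_bidmc W -> is_bidmc Q ->
  symmetric_bidmc R -> symmetric_bidmc W -> symmetric_bidmc Q ->
  0 < p < 1 ->
  degraded (switch p R W) (switch p R Q) ->
  degraded W Q.
Proof.
move=> _ [W0 W1] _ _ _ _ hp [T [T0 T1 hT]].
case: (pickP (fun _ : YW => true)) => [z0 _|hE]; last first.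
  have := W1 false; rewrite big_pred0 // => /eqP; by rewrite eq_sym oner_eq0.
pose A := fun (x : (YQ * YW)%type) (j : ((bool * YW) + YQ)%type) =>
  match j with inl (a, z) => Q a x.1 * (x.2 == z)%:R | inr y => (x.1 == y)%:R end : K.
pose b := fun j : ((bool * YW) + YQ)%type =>
  match j with inl (a, z) => W a z | inr _ => 1 end : K.
case: (@farkas _ _ _ A b) => [[lam [l0 hl]]|[yv [hy hb]]].
  exists (fun y z => lam (y, z)); split => //.
    move=> y; have := hl (inr y); rewrite /b /A sum_pair /= => ->.
    under [in RHS]eq_bigr do rewrite -mulr_suml.
    by rewrite sum_delta.
  move=> a z; have := hl (inl (a, z)); rewrite /b /A sum_pair /= => ->.
  apply: eq_bigr => y _; under eq_bigr do rewrite mulrA.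
  by rewrite sum_delta mulrC.
exfalso.
pose u := fun a z => yv (inl (a, z)).
have hdot : forall (y : YQ) (z : YW), dot yv (A (y, z)) =
   yv (inl (true, z)) * Q true y + yv (inl (false, z)) * Q false y + yv (inr y).
  move=> y z; rewrite /dot big_sumType /= sum_pair big_bool /=.
  by rewrite !sum_delta2C sum_deltaC.
have hQ : Phi u z0 Q <= \sum_y yv (inr y).
  rewrite /Phi; apply: ler_sum => y _; apply: phi_le => z.
  have := hy (y, z); rewrite hdot /ell /u /=; lra.
have hW : \sum_y yv (inr y) < Phi u z0 W.
  have := hb; rewrite /dot big_sumType /= sum_pair big_bool /=.
  under [X in _ + X < _]eq_bigr do rewrite mulr1.
  move=> h.
  have hs : \sum_z ell u z (W false z) (W true z) <= Phi u z0 W.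
    by apply: ler_sum => z _; exact: ell_le_phi.
  have e : \sum_z ell u z (W false z) (W true z) =
    - (\sum_z yv (inl (true, z)) * W true z + \sum_z yv (inl (false, z)) * W false z).
    by rewrite /ell /u /= sumrN big_split /= addrC.
  lra.
have hdeg := Phi_degr u z0 T T0 T1 hT.
rewrite !Phi_switch // in hdeg.
case/andP: hp => p0 p1.
have : Phi u z0 W <= Phi u z0 Q.
  by rewrite -(ler_pM2l (_ : 0 < 1 - p)) ?subr_gt0 //; lra.
lra.
Qed.
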